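(* For all $n\ge 1$, $|F_n(321,3124,4123)|=F_{n+1}-1$, where $F_n$ is the $n$-th Fibonacci number with $F_0=F_1=1$ and $F_n=F_{n-1}+F_{n-2}$ for $n\ge 2$.
   Context: A permutation $\pi$ avoids a classical pattern $p\in S_k$ if no subsequence of $\pi$ of length $k$ is order-isomorphic to $p$. A Fishburn permutation is a permutation $\pi=\pi_1\cdots\pi_n$ of $[n]$ for which there are no indices $i<j$ with $\pi_j<\pi_i<\pi_{i+1}$ and $\pi_i=\pi_j+1$. $F_n(\sigma_1,\dots,\sigma_k)$ denotes the set of Fishburn permutations of length $n$ avoiding each of the classical patterns $\sigma_1,\dots,\sigma_k$. *)

(* Defs.v *)
From mathcomp Require Import all_boot all_order all_fingroup.
Set Implicit Arguments. Unset Strict Implicit. Unset Printing Implicit Defensive.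

(* A permutation of [n] is represented as s : {perm 'I_n}, with pi_{i+1} = s i
   (0-based positions and values; only relative order matters). *)

Definition contains_pattern (n : nat) (s : {perm 'I_n}) (p : seq nat) : bool :=
  [exists f : {ffun 'I_(size p) -> 'I_n},
    [forall a : 'I_(size p), forall b : 'I_(size p),
       ((a < b)%N ==> (f a < f b)%N) &&
       ((s (f a) < s (f b))%N == (nth 0 p a < nth 0 p b)%N)]].

Definition avoids (n : nat) (s : {perm 'I_n}) (p : seq nat) : bool :=
  ~~ contains_pattern s p.

Definition fishburn (n : nat) (s : {perm 'I_n}) : bool :=
  ~~ [exists i : 'I_n, exists j : 'I_n, exists i1 : 'I_n,
      [&& (i < j)%N, val i1 == (val i).+1,
          (s j < s i)%N, (s i < s i1)%N & val (s i) == (val (s j)).+1]].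

Definition Fset (n : nat) (pats : seq (seq nat)) : {set {perm 'I_n}} :=
  [set s : {perm 'I_n} | fishburn s && all (avoids s) pats].

Fixpoint fib (n : nat) : nat :=
  match n with
  | 0 => 1
  | 1 => 1
  | (m.+1 as k).+1 => fib k + fib m
  end.

(* Main.v *)
Require Import Defs.
From mathcomp Require Import all_boot all_order all_fingroup.
From mathcomp Require Import zify.
Set Implicit Arguments. Unset Strict Implicit. Unset Printing Implicit Defensive.

Definition fbP (t : seq nat) := exists i j, [/\ i < j, j < size t, i.+1 < size t,
  nth 0 t i < nth 0 t i.+1 & nth 0 t i = (nth 0 t j).+1].

Definition cpP (t p : seq nat) := exists g : nat -> nat,
  [/\ forall a b, a < b -> b < size p -> g a < g b,
      forall a, a < size p -> g a < size t &
      forall a b, a < size p -> b < size p ->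
        (nth 0 t (g a) < nth 0 t (g b)) = (nth 0 p a < nth 0 p b)].

Definition tseq n (s : {perm 'I_n}) := [seq val (s i) | i <- enum 'I_n].

Lemma size_tseq n (s : {perm 'I_n}) : size (tseq s) = n.
Proof. by rewrite size_map size_enum_ord. Qed.

Lemma nth_tseq n (s : {perm 'I_n}) (i : 'I_n) : nth 0 (tseq s) i = s i.
Proof. by rewrite (nth_map i) ?size_enum_ord // nth_ord_enum. Qed.

Lemma fishP n (s : {perm 'I_n}) : fishburn s <-> ~ fbP (tseq s).
Proof.
rewrite /fishburn; split.
- move/negP=> H [i [j [ij jn i1n h2 h3]]]; apply: H.
  have h1 : nth 0 (tseq s) j < nth 0 (tseq s) i by rewrite h3.
  rewrite size_tseq in jn i1n.
  apply/existsP; exists (Ordinal (ltn_trans ij jn)).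
  apply/existsP; exists (Ordinal jn); apply/existsP; exists (Ordinal i1n).
  move: h1 h2 h3.
  rewrite -[i]/(val (Ordinal (ltn_trans ij jn))) -[j]/(val (Ordinal jn)) !nth_tseq.
  rewrite -[i.+1]/(val (Ordinal i1n)) !nth_tseq /= => h1 h2 h3.
  by rewrite ij eqxx h1 h2 /= h3.
- move=> H; apply/negP => /existsP [i /existsP [j /existsP [i1 /and5P [ij /eqP hi1 h1 h2 /eqP h3]]]].
  apply: H; exists i, j; rewrite size_tseq; split => //; first by rewrite -hi1 ltn_ord.
  + by rewrite -hi1 !nth_tseq.
  + by rewrite !nth_tseq.
Qed.

Lemma avoidsP n (s : {perm 'I_n}) p : 0 < size p -> avoids s p <-> ~ cpP (tseq s) p.
Proof.
move=> p0; rewrite /avoids /contains_pattern; split.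
- move/negP=> H [g [g1 g2 g3]]; apply: H.
  case: n s g2 g3 => [|n] s g2 g3; first by have := g2 0 p0; rewrite size_tseq.
  apply/existsP; exists [ffun a : 'I_(size p) => (inord (g a) : 'I_n.+1)].
  apply/forallP => a; apply/forallP => b.
  rewrite !ffunE; have ga := g2 a (ltn_ord a); have gb := g2 b (ltn_ord b).
  rewrite size_tseq in ga gb.
  rewrite !inordK //; apply/andP; split.
  + by apply/implyP => ab; apply: g1.
  + have -> : (inord (g a) : 'I_n.+1) = Ordinal ga by apply: val_inj; rewrite /= inordK.
    have -> : (inord (g b) : 'I_n.+1) = Ordinal gb by apply: val_inj; rewrite /= inordK.
    by rewrite -(g3 a b) // -!nth_tseq.
- move=> H; apply/negP => /existsP [f /forallP Hf]; apply: H.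
  pose g a := if insub a is Some a' then val (f a') else 0.
  have gE (a' : 'I_(size p)) : g a' = f a' by rewrite /g valK.
  exists g; split.
  + move=> a b ab bp; have ap := ltn_trans ab bp.
    rewrite -[a]/(val (Ordinal ap)) -[b]/(val (Ordinal bp)) !gE.
    by have /andP [/implyP H' _] := forallP (Hf (Ordinal ap)) (Ordinal bp); apply: H'.
  + by move=> a ap; rewrite -[a]/(val (Ordinal ap)) gE size_tseq.
  + move=> a b ap bp; rewrite -[a]/(val (Ordinal ap)) -[b]/(val (Ordinal bp)) !gE !nth_tseq.
    by have /andP [_ /eqP ->] := forallP (Hf (Ordinal ap)) (Ordinal bp).
Qed.
Lemma nth_shift k r i : i < size r -> nth 0 (map (addn k) r) i = k + nth 0 r i.
Proof. by move=> ir; rewrite (nth_map 0). Qed.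

Lemma fb1 r : fbP (0 :: map (addn 1) r) <-> fbP r.
Proof.
split.
- case=> [[|i] [[|j] [ij jn i1n h2 h3]]] //.
  rewrite /= size_map in jn i1n h2 h3.
  rewrite !nth_shift in h2 h3; try lia.
  exists i, j; split; lia.
- case=> i [j [ij jn i1n h2 h3]]; exists i.+1, j.+1; rewrite /= size_map !nth_shift; try lia.
  split; lia.
Qed.

Lemma fb2 r : fbP (1 :: 0 :: map (addn 2) r) <-> fbP r.
Proof.
split.
- case=> [[|[|i]] [[|[|j]] [ij jn i1n h2 h3]]] //.
  rewrite /= size_map in jn i1n h2 h3.
  rewrite !nth_shift in h2 h3; try lia.
  exists i, j; split; lia.
- case=> i [j [ij jn i1n h2 h3]]; exists i.+2, j.+2; rewrite /= size_map !nth_shift; try lia.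
  split; lia.
Qed.

Lemma cp1 r p : 1 < size p -> nth 0 p 1 < nth 0 p 0 ->
  cpP (0 :: map (addn 1) r) p <-> cpP r p.
Proof.
move=> p1 p10; split.
- case=> g [g1 g2 g3].
  have gpos a : a < size p -> 0 < g a.
    case: a => [|a] ap; last by have := g1 0 a.+1 erefl ap; lia.
    case e: (g 0) => [|x] //; have := g3 1 0 p1 (ltnW p1); rewrite e p10 /=.
    by case: (g 1).
  exists (fun a => (g a).-1); split.
  + move=> a b ab bp; have := g1 a b ab bp; have := gpos a (ltn_trans ab bp); lia.
  + move=> a ap; have := g2 a ap; have := gpos a ap; rewrite /= size_map; lia.
  + move=> a b ap bp; rewrite -(g3 a b ap bp).
    have := g2 a ap; have := g2 b bp; have := gpos a ap; have := gpos b bp.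
    rewrite /= size_map.
    case: (g a) => [|x] //; case: (g b) => [|y] // _ _ yr xr /=.
    rewrite !nth_shift //; lia.
- case=> g [g1 g2 g3]; exists (fun a => (g a).+1); split.
  + by move=> a b ab bp; have := g1 a b ab bp.
  + by move=> a ap; have := g2 a ap; rewrite /= size_map.
  + move=> a b ap bp; rewrite -(g3 a b ap bp) /= !nth_shift ?g2 //; lia.
Qed.

Lemma cp2 r p : 2 < size p -> nth 0 p 1 < nth 0 p 0 -> nth 0 p 2 < nth 0 p 0 ->
  cpP (1 :: 0 :: map (addn 2) r) p <-> cpP r p.
Proof.
move=> p2 p10 p20; split.
- case=> g [g1 g2 g3].
  have g12 := g1 1 2 erefl p2.
  have g01 := g1 0 1 erefl (ltn_trans (ltnSn 1) p2).
  have p1' : 1 < size p by apply: ltn_trans p2.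
  have h1 := g3 1 0 p1' (ltnW p1'); have h2 := g3 2 0 p2 (ltnW (ltnW p2)).
  rewrite p10 p20 in h1 h2.
  have b1 := g2 1 p1'; have b2 := g2 2 p2; rewrite /= size_map in b1 b2.
  have g0big : 1 < g 0.
  { move: g01 g12 h1 h2 b1 b2.
    case: (g 0) => [|[|x]] //; case: (g 1) => [|[|u]] //; case: (g 2) => [|[|v]] //=.
    all: try (move=> *; lia).
    all: move=> _ _ h1 h2 b1 b2; move: h1 h2; rewrite ?nth_shift; try lia. }
  have gpos a : a < size p -> 1 < g a.
    case: a => [|a] ap //; have := g1 0 a.+1 erefl ap; lia.
  exists (fun a => (g a).-2); split.
  + move=> a b ab bp; have := g1 a b ab bp; have := gpos a (ltn_trans ab bp); lia.
  + move=> a ap; have := g2 a ap; have := gpos a ap; rewrite /= size_map; lia.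
  + move=> a b ap bp; rewrite -(g3 a b ap bp).
    have := g2 a ap; have := g2 b bp; have := gpos a ap; have := gpos b bp.
    rewrite /= size_map.
    case: (g a) => [|[|x]] //; case: (g b) => [|[|y]] // _ _ yr xr /=.
    rewrite !nth_shift //; lia.
- case=> g [g1 g2 g3]; exists (fun a => (g a).+2); split.
  + by move=> a b ab bp; have := g1 a b ab bp.
  + by move=> a ap; have := g2 a ap; rewrite /= size_map.
  + move=> a b ap bp; rewrite -(g3 a b ap bp) /= !nth_shift ?g2 //; lia.
Qed.

Definition p1 := [:: 3; 2; 1].
Definition p2 := [:: 3; 1; 2; 4].
Definition p3 := [:: 4; 1; 2; 3].
Definition valid t := [/\ ~ fbP t, ~ cpP t p1, ~ cpP t p2 & ~ cpP t p3].

Ltac blia := solve [lia | apply/negbTE; rewrite -leqNgt; lia].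

Lemma c321I t i j k : i < j -> j < k -> k < size t ->
  nth 0 t j < nth 0 t i -> nth 0 t k < nth 0 t j -> cpP t p1.
Proof.
move=> ij jk kt h1 h2; exists (fun a => nth 0 [:: i; j; k] a); split.
- move=> a b ab bp; case: a ab => [|[|[|a]]]; case: b bp => [|[|[|b]]] //= *; lia.
- move=> a ap; case: a ap => [|[|[|a]]] //= *; lia.
- move=> a b ap bp; case: a ap => [|[|[|a]]]; case: b bp => [|[|[|b]]] //= *; blia.
Qed.

Lemma c3124I t i j k l : i < j -> j < k -> k < l -> l < size t ->
  nth 0 t j < nth 0 t k -> nth 0 t k < nth 0 t i -> nth 0 t i < nth 0 t l -> cpP t p2.
Proof.
move=> ij jk kl lt h1 h2 h3; exists (fun a => nth 0 [:: i; j; k; l] a); split.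
- move=> a b ab bp; case: a ab => [|[|[|[|a]]]]; case: b bp => [|[|[|[|b]]]] //= *; lia.
- move=> a ap; case: a ap => [|[|[|[|a]]]] //= *; lia.
- move=> a b ap bp; case: a ap => [|[|[|[|a]]]]; case: b bp => [|[|[|[|b]]]] //= *; blia.
Qed.

Lemma c4123I t i j k l : i < j -> j < k -> k < l -> l < size t ->
  nth 0 t j < nth 0 t k -> nth 0 t k < nth 0 t l -> nth 0 t l < nth 0 t i -> cpP t p3.
Proof.
move=> ij jk kl lt h1 h2 h3; exists (fun a => nth 0 [:: i; j; k; l] a); split.
- move=> a b ab bp; case: a ab => [|[|[|[|a]]]]; case: b bp => [|[|[|[|b]]]] //= *; lia.
- move=> a ap; case: a ap => [|[|[|[|a]]]] //= *; lia.
- move=> a b ap bp; case: a ap => [|[|[|[|a]]]]; case: b bp => [|[|[|[|b]]]] //= *; blia.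
Qed.

Lemma valid_small t : size t <= 1 -> valid t.
Proof.
move=> st; split.
- by case=> i [j [ij jt _ _ _]]; lia.
- by case=> g [g1 g2 _]; have := g1 0 1 erefl erefl; have := g2 1 erefl; lia.
- by case=> g [g1 g2 _]; have := g1 0 1 erefl erefl; have := g2 1 erefl; lia.
- by case=> g [g1 g2 _]; have := g1 0 1 erefl erefl; have := g2 1 erefl; lia.
Qed.

Lemma valid1 r : valid (0 :: map (addn 1) r) <-> valid r.
Proof.
rewrite /valid; have := fb1 r; have := @cp1 r p1 erefl erefl;
have := @cp1 r p2 erefl erefl; have := @cp1 r p3 erefl erefl;
by move=> e1 e2 e3 e4; split=> -[a b c d]; split; tauto.
Qed.

Lemma valid2 r : valid (1 :: 0 :: map (addn 2) r) <-> valid r.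
Proof.
rewrite /valid; have := fb2 r; have := @cp2 r p1 erefl erefl erefl;
have := @cp2 r p2 erefl erefl erefl; have := @cp2 r p3 erefl erefl erefl;
by move=> e1 e2 e3 e4; split=> -[a b c d]; split; tauto.
Qed.

Definition spec m := 2 :: 0 :: iota 3 (m - 3) ++ [:: 1].

Lemma size_spec m : 3 <= m -> size (spec m) = m.
Proof. by move=> m3; rewrite /= size_cat size_iota /=; lia. Qed.

Lemma specnth m i : 3 <= m -> i < m ->
  (i = 0 /\ nth 0 (spec m) i = 2) \/ (i = 1 /\ nth 0 (spec m) i = 0) \/
  (2 <= i /\ i.+1 < m /\ nth 0 (spec m) i = i.+1) \/ (i = m.-1 /\ nth 0 (spec m) i = 1).
Proof.
move=> m3 im; case: i im => [|[|i]] im /=; [by left|by right; left|].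
rewrite nth_cat size_iota; case: ltnP => h.
- by rewrite nth_iota //; right; right; left; lia.
- have -> : i - (m - 3) = 0 by lia.
  by right; right; right; simpl; lia.
Qed.

Lemma valid_spec m : 3 <= m -> valid (spec m).
Proof.
move=> m3; have sz := size_spec m3; split.
- case=> i [j [ij jt i1t h2 h3]]; rewrite sz in jt i1t.
  have := specnth m3 i1t; have := specnth m3 jt; have := specnth m3 (ltnW i1t).
  lia.
- case=> g [g1 g2 g3]; rewrite sz in g2.
  have := g1 0 1 erefl erefl; have := g1 1 2 erefl erefl.
  have : nth 0 (spec m) (g 1) < nth 0 (spec m) (g 0) by rewrite g3.  have : nth 0 (spec m) (g 2) < nth 0 (spec m) (g 1) by rewrite g3.
  have := specnth m3 (g2 0 erefl).
  have := specnth m3 (g2 1 erefl).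
  have := specnth m3 (g2 2 erefl).
  have := g2 2 erefl.
  lia.
- case=> g [g1 g2 g3]; rewrite sz in g2.
  have := g1 0 1 erefl erefl; have := g1 1 2 erefl erefl; have := g1 2 3 erefl erefl.
  have : nth 0 (spec m) (g 1) < nth 0 (spec m) (g 2) by rewrite g3.  have : nth 0 (spec m) (g 2) < nth 0 (spec m) (g 0) by rewrite g3.  have : nth 0 (spec m) (g 0) < nth 0 (spec m) (g 3) by rewrite g3.
  have := specnth m3 (g2 0 erefl).
  have := specnth m3 (g2 1 erefl).
  have := specnth m3 (g2 2 erefl).
  have := specnth m3 (g2 3 erefl).
  have := g2 3 erefl.
  lia.
- case=> g [g1 g2 g3]; rewrite sz in g2.
  have := g1 0 1 erefl erefl; have := g1 1 2 erefl erefl; have := g1 2 3 erefl erefl.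
  have : nth 0 (spec m) (g 1) < nth 0 (spec m) (g 2) by rewrite g3.  have : nth 0 (spec m) (g 2) < nth 0 (spec m) (g 3) by rewrite g3.  have : nth 0 (spec m) (g 3) < nth 0 (spec m) (g 0) by rewrite g3.
  have := specnth m3 (g2 0 erefl).
  have := specnth m3 (g2 1 erefl).
  have := specnth m3 (g2 2 erefl).
  have := specnth m3 (g2 3 erefl).
  have := g2 3 erefl.
  lia.
Qed.

Fixpoint Sx n := match n with
| 0 => [:: [::]]
| 1 => [:: [:: 0]]
| (m.+1 as k).+1 => [seq 0 :: map (addn 1) r | r <- Sx k] ++
     [seq 1 :: 0 :: map (addn 2) r | r <- Sx m] ++ (if 0 < m then [:: spec m.+2] else [::])
end.

Lemma SxE n : Sx n.+2 = [seq 0 :: map (addn 1) r | r <- Sx n.+1] ++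
     [seq 1 :: 0 :: map (addn 2) r | r <- Sx n] ++ (if 0 < n then [:: spec n.+2] else [::]).
Proof. by []. Qed.

Lemma iota1 n : iota 0 n.+1 = 0 :: map (addn 1) (iota 0 n).
Proof. by rewrite -iotaDl. Qed.

Lemma iota2 n : iota 0 n.+2 = 0 :: 1 :: map (addn 2) (iota 0 n).
Proof. by rewrite -iotaDl. Qed.

Lemma perm_spec m : 3 <= m -> perm_eq (spec m) (iota 0 m).
Proof.
move=> m3; apply: uniq_perm.
- rewrite /spec /= !(cat_uniq, iota_uniq, mem_cat, mem_iota, inE) /=.
  by rewrite mem_iota.
- exact: iota_uniq.
- move=> x; rewrite /spec mem_iota !inE mem_cat mem_iota !inE.
  apply/idP/idP; lia.
Qed.

Lemma Sperm n t : t \in Sx n -> perm_eq t (iota 0 n).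
Proof.
elim/ltn_ind: n t => -[|[|n]] IH t.
- by rewrite inE => /eqP ->.
- by rewrite inE => /eqP ->.
rewrite SxE !mem_cat => /or3P [/mapP [r rS ->] | /mapP [r rS ->] | ht].
- by rewrite iota1 perm_cons perm_map // IH.
- rewrite iota2 -[1 :: 0 :: _]/([:: 1] ++ [:: 0] ++ _) perm_catCA /= !perm_cons.
  by rewrite perm_map // IH.
- case: n IH ht => [|n] IH //; rewrite inE => /eqP ->; exact: perm_spec.
Qed.

Lemma Suniq n : uniq (Sx n).
Proof.
elim/ltn_ind: n => -[|[|n]] IH //.
rewrite SxE !cat_uniq !map_inj_uniq ?IH //.
- apply/and5P; split => //.
  + apply/hasPn => x; rewrite mem_cat => /orP [/mapP [r _ ->]|].
    * by apply/negP => /mapP [r' _ E]; discriminate E.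
    * case: n {IH} => // n; rewrite inE => /eqP ->.
      by apply/negP => /mapP [r' _ E]; discriminate E.
  + apply/hasPn => x; case: n {IH} => // n; rewrite inE => /eqP -> .
    by apply/negP => /mapP [r' _ E]; discriminate E.
  + by case: n {IH}.
- by move=> r1 r2 [] /(inj_map (@addnI _)).
- by move=> r1 r2 [] /(inj_map (@addnI _)).
Qed.

Lemma fib_gt0 n : 0 < fib n.
Proof.
elim/ltn_ind: n => -[|[|n]] IH //.
have -> : fib n.+2 = fib n.+1 + fib n by [].
have := IH n.+1 (ltnSn _); lia.
Qed.

Lemma Ssize n : 1 <= n -> size (Sx n) = (fib n.+1).-1.
Proof.
elim/ltn_ind: n => -[|[|[|n]]] IH // _.
rewrite SxE !size_cat !size_map (IH n.+2) // (IH n.+1) //.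
have -> : fib n.+4 = fib n.+3 + fib n.+2 by [].
rewrite [size _]/=.
have := fib_gt0 n.+3; have := fib_gt0 n.+2; lia.
Qed.

Section Facts.
Variables (n : nat) (t : seq nat).
Hypothesis pt : perm_eq t (iota 0 n).

Lemma ut : uniq t.
Proof. by rewrite (perm_uniq pt) iota_uniq. Qed.
Lemma st : size t = n.
Proof. by rewrite (perm_size pt) size_iota. Qed.
Lemma memt v : (v \in t) = (v < n).
Proof. by rewrite (perm_mem pt) mem_iota. Qed.
Lemma nthI a b : a < n -> b < n -> nth 0 t a = nth 0 t b -> a = b.
Proof.
move=> an bn e; apply/eqP; rewrite -(nth_uniq 0 _ _ ut) ?st //; exact/eqP.
Qed.
Lemma nth_lt a : a < n -> nth 0 t a < n.
Proof. by move=> an; rewrite -memt mem_nth // st. Qed.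
Lemma idxP v : v < n -> index v t < n /\ nth 0 t (index v t) = v.
Proof.
by move=> vn; rewrite -memt in vn; rewrite nth_index // -st index_mem.
Qed.
End Facts.

Lemma fish_first n t : perm_eq t (iota 0 n.+2) -> valid t -> 1 <= nth 0 t 0 ->
  nth 0 t 1 < nth 0 t 0.
Proof.
move=> pt [nf _ _ _] x1.
have n0 := nth_lt pt (erefl : 0 < n.+2).
have n1 := nth_lt pt (erefl : 1 < n.+2).
rewrite ltnNge leq_eqVlt; apply/negP => /orP [/eqP e | lt].
  by have := nthI pt (erefl : 0 < n.+2) (erefl : 1 < n.+2) e.
have hv : (nth 0 t 0).-1 < n.+2 by lia.
have [jn jv] := idxP pt hv.
set j := index _ _ in jn jv.
have j0 : j != 0 by apply/eqP => e; move: jv; rewrite e; lia.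
have j1 : j != 1 by apply/eqP => e; move: jv; rewrite e; lia.
apply: nf; exists 0, j; rewrite (st pt); split => //; lia.
Qed.

Lemma big_case n t : perm_eq t (iota 0 n.+2) -> valid t -> 2 <= nth 0 t 0 ->
  0 < n /\ t = spec n.+2.
Proof.
move=> pt vt x2; have y_lt := fish_first pt vt (ltnW x2).
case: vt => nf c1 c2 c3.
have sz := st pt.
have I := nthI pt.
have L := nth_lt pt.
have x_lt := L 0 erefl.
have y0 : nth 0 t 1 = 0.
  case ey: (nth 0 t 1) => [|y'] //; exfalso.
  have [jn jv] := idxP pt (erefl : 0 < n.+2).
  set j := index _ _ in jn jv.
  have j0 : j != 0 by apply/eqP => e; move: jv; rewrite e; lia.
  have j1 : j != 1 by apply/eqP => e; move: jv; rewrite e ey.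
  apply: c1; apply: (@c321I t 0 1 j); rewrite ?sz //; lia.
have x2e : nth 0 t 0 = 2.
  case: (ltngtP (nth 0 t 0) 2) => // x3; [lia|exfalso].
  have h1 : 1 < n.+2 by lia.
  have h2 : 2 < n.+2 by lia.
  have [j1n j1v] := idxP pt h1; have [j2n j2v] := idxP pt h2.
  set j1 := index 1 t in j1n j1v; set j2 := index 2 t in j2n j2v.
  have a1 : j1 != 0 by apply/eqP => e; move: j1v; rewrite e; lia.
  have a2 : j2 != 0 by apply/eqP => e; move: j2v; rewrite e; lia.
  have b1 : j1 != 1 by apply/eqP => e; move: j1v; rewrite e y0.
  have b2 : j2 != 1 by apply/eqP => e; move: j2v; rewrite e y0.
  case: (ltngtP j1 j2) => jj.
  - by apply: c3; apply: (@c4123I t 0 1 j1 j2); rewrite ?sz //; lia.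
  - by apply: c1; apply: (@c321I t 0 j2 j1); rewrite ?sz //; lia.
  - by move: j1v; rewrite jj j2v.
have n0 : 0 < n by lia.
split => //.
have h1 : 1 < n.+2 by lia.
have [j1n j1v] := idxP pt h1; set j1 := index 1 t in j1n j1v.
have a1 : j1 != 0 by apply/eqP => e; move: j1v; rewrite e x2e.
have b1 : j1 != 1 by apply/eqP => e; move: j1v; rewrite e y0.
have big a : a < n.+2 -> a != 0 -> a != 1 -> a != j1 -> 3 <= nth 0 t a.
  move=> an e0 e1 ej; case: (ltnP (nth 0 t a) 3) => // h; exfalso.
  case E: (nth 0 t a) h => [|[|[|]]] // _.
  - have := I a 1 an (erefl : 1 < n.+2); rewrite E y0 => /(_ erefl) e.
    by rewrite e in e1.
  - have := I a j1 an j1n; rewrite E j1v => /(_ erefl) e.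
    by rewrite e eqxx in ej.
  - have := I a 0 an (erefl : 0 < n.+2); rewrite E x2e => /(_ erefl) e.
    by rewrite e in e0.
have j1e : j1 = n.+1.
  case: (ltngtP j1 n.+1) => // jl; last by lia.
  exfalso; have z3 : 3 <= nth 0 t n.+1 by apply: big => //; apply/eqP; lia.
  by apply: c2; apply: (@c3124I t 0 1 j1 n.+1); rewrite ?sz ?x2e ?y0 ?j1v //; lia.
have mid i : 2 <= i -> i < n -> nth 0 t i < nth 0 t i.+1.
  move=> i2 iN; case: (ltngtP (nth 0 t i) (nth 0 t i.+1)) => // h; exfalso.
  - have b := big i.+1 ltac:(lia) ltac:(apply/eqP; lia) ltac:(apply/eqP; lia) ltac:(apply/eqP; lia).
    by apply: c1; apply: (@c321I t i i.+1 n.+1); rewrite ?sz -?j1e ?j1v //; lia.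
  - by have := I i i.+1 ltac:(lia) ltac:(lia) h; lia.
have lower i : 2 <= i -> i <= n -> i.+1 <= nth 0 t i.
  elim: i => [|i IH] // i2 iN.
  case: (ltnP i 2) => hi.
  - have -> : i.+1 = 2 by lia.
    by apply: big; apply/eqP; lia.
  - have := IH hi (ltnW iN); have := mid i hi iN; lia.
have upper k : k <= n - 2 -> nth 0 t (n - k) <= (n - k).+1.
  elim: k => [|k IH] kn; first by have := L n ltac:(lia); rewrite subn0; lia.
  have := IH (ltnW kn); have := mid (n - k.+1) ltac:(lia) ltac:(lia).
  have -> : (n - k.+1).+1 = n - k by lia.
  lia.
apply: (@eq_from_nth _ 0); first by rewrite sz size_spec //; lia.
move=> i; rewrite sz => iN.
have m3 : 3 <= n.+2 by lia.
have := specnth m3 iN.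
case=> [[-> ->]|[[-> ->]|[[i2 [iN' ->]]|[-> ->]]]] //.
- have := lower i i2 ltac:(lia); have := upper (n - i) ltac:(lia).
  have -> : n - (n - i) = i by lia.
  lia.
- by rewrite -j1e.
Qed.

Lemma unshift k r : all (fun v => k <= v) r -> r = map (addn k) (map (subn^~ k) r).
Proof.
move=> /allP rk; rewrite -map_comp map_id_in // => v /rk /= kv; lia.
Qed.

Lemma charS n t : perm_eq t (iota 0 n) -> (valid t <-> t \in Sx n).
Proof.
elim/ltn_ind: n t => -[|[|n]] IH t pt.
- have := st pt; move/size0nil ->; split => _; [by rewrite inE|exact: valid_small].
- have s1 := st pt; case: t pt s1 => [|x [|]] // pt _.
  have : x \in iota 0 1 by rewrite -(perm_mem pt) inE.
  rewrite mem_iota => x0; have -> : x = 0 by lia.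
  split => _; [by rewrite inE | exact: valid_small].
split.
- move=> vt; have sz := st pt; have u := ut pt.
  case: t pt vt sz u => [|x [|y r3]] // pt vt _ u.
  case: (ltnP x 2) => hx.
  + case: x hx pt vt u => [|[|]] // _ pt vt u.
    * rewrite SxE mem_cat; apply/orP; left.
      set r := y :: r3 in pt vt u *.
      have er : r = map (addn 1) (map (subn^~ 1) r).
        apply: unshift; apply/allP => v vr; rewrite /= in u; case/andP: u => u _.
        by case: v vr => // vr; rewrite vr in u.
      rewrite er in pt vt.
      rewrite iota1 perm_cons in pt; move/(perm_map_inj (@addnI 1)): pt => pr.
      apply/mapP; exists (map (subn^~ 1) r); last by rewrite -er.
      by apply/(IH n.+1) => //; apply/valid1.
    * have y0 : y = 0 by have := fish_first pt vt isT; rewrite /=; lia.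
      rewrite y0 in pt vt u *.
      rewrite SxE !mem_cat; apply/orP; right; apply/orP; left.
      have er : r3 = map (addn 2) (map (subn^~ 2) r3).
        apply: unshift; apply/allP => v vr; rewrite /= !inE in u; case/and3P: u => /norP [_ u1] u2 _.
        case: v vr => [|[|v]] // vr; [by rewrite vr in u2|by rewrite vr in u1].
      rewrite er in pt vt.
      rewrite iota2 in pt.
      move: pt; rewrite -[1 :: 0 :: _]/([:: 1] ++ [:: 0] ++ _) perm_catCA /= !perm_cons.
      move/(perm_map_inj (@addnI 2)) => pr.
      apply/mapP; exists (map (subn^~ 2) r3); last by rewrite -er.
      by apply/(IH n) => //; apply/valid2.
  + have [n0 e] := big_case pt vt hx; rewrite e SxE !mem_cat.
    case: n n0 {IH pt vt e} => // n _; apply/orP; right; apply/orP; right.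
    by rewrite inE.
- rewrite SxE !mem_cat => /or3P [/mapP [r rS ->] | /mapP [r rS ->] | ht].
  + by apply/valid1; apply/(IH n.+1) => //; apply: Sperm.
  + by apply/valid2; apply/(IH n) => //; apply: Sperm.
  + case: n {IH pt} ht => // n; rewrite inE => /eqP ->.
    by apply: valid_spec.
Qed.

Lemma tseq_inj n : injective (@tseq n).
Proof.
move=> s1 s2 e; apply/permP => i; apply: val_inj.
by have := congr1 (fun u => nth 0 u i) e; rewrite /= !nth_tseq.
Qed.

Lemma tseq_surj n t : perm_eq t (iota 0 n) -> exists s : {perm 'I_n}, tseq s = t.
Proof.
move=> pt.
have H (i : 'I_n) : nth 0 t i < n by apply: (nth_lt pt).
pose f (i : 'I_n) : 'I_n := Ordinal (H i).
have finj : injective f.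
  move=> i j /(congr1 val) /= e; apply: val_inj; exact: (nthI pt (ltn_ord i) (ltn_ord j) e).
exists (perm finj); apply: (@eq_from_nth _ 0); first by rewrite size_tseq (st pt).
move=> i; rewrite size_tseq => iN.
by rewrite -[i]/(val (Ordinal iN)) nth_tseq permE.
Qed.

Theorem mainTheorem15 (n : nat) :
  (1 <= n)%N ->
  #|Fset n [:: [:: 3; 2; 1]; [:: 3; 1; 2; 4]; [:: 4; 1; 2; 3]]| = (fib n.+1).-1.
Proof.
move=> n1; rewrite -Ssize // cardE.
set A := Fset _ _.
have memA (s : {perm 'I_n}) : (s \in A) = (tseq s \in Sx n).
  rewrite inE /= !andbT.
  have pt : perm_eq (tseq s) (iota 0 n).
    apply: uniq_perm; rewrite ?iota_uniq //.
    - rewrite map_inj_uniq ?enum_uniq // => i j /val_inj; exact: perm_inj.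
    - move=> x; rewrite mem_iota add0n; apply/mapP/idP.
        by case=> i _ ->; exact: ltn_ord.
      move=> xn; exists ((perm_inv s) (Ordinal xn)); first by rewrite mem_enum.
      by rewrite permKV.
  apply/idP/idP.
  - move=> /and4P [f a1 a2 a3]; apply/(charS pt); split.
    + exact/fishP.
    + exact/avoidsP.
    + exact/avoidsP.
    + exact/avoidsP.
  - move=> /(charS pt) [f a1 a2 a3]; apply/and4P; split.
    + exact/fishP.
    + exact/avoidsP.
    + exact/avoidsP.
    + exact/avoidsP.
rewrite -(size_map (@tseq n)); apply: perm_size.
apply: uniq_perm.
- by rewrite map_inj_uniq ?enum_uniq //; exact: tseq_inj.
- exact: Suniq.
- move=> t; apply/mapP/idP => [[s sA ->]|tS].
  + by rewrite -memA -mem_enum.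
  + have [s es] := tseq_surj (Sperm tS); exists s; last by rewrite es.
    by rewrite mem_enum memA es.
Qed.
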